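(* Let $k\geq 2$ be an integer and let $A=[\bm{a}_1,\dots,\bm{a}_n]\in\mathbb{R}^{m\times n}$ have columns with $\|\bm{a}_i\|_2=1$ for all $i$, and suppose its mutual coherence $\mu=\max_{1\leq i<j\leq n}|\langle \bm{a}_i,\bm{a}_j\rangle|$ satisfies $$\mu<\frac{1}{k-1}.$$ Then for every vector $\bm{h}\in\mathbb{R}^n$ and every subset $E\subset\{1,\dots,n\}$ with $|E|=k$, $$\|\bm{h}_E\|_2\leq \alpha_1\|A\bm{h}\|_2+\alpha_2\|\bm{h}_{E^c}\|_1,$$ where $$\alpha_1=\frac{\sqrt{1+(k-1)\mu}}{1-(k-1)\mu},\qquad \alpha_2=\frac{\sqrt{k}\,\mu}{1-(k-1)\mu}.$$
   Context: For $E\subset\{1,\dots,n\}$, $E^c=\{1,\dots,n\}\setminus E$, and for a vector $\bm{h}\in\mathbb{R}^n$, $\bm{h}_E$ denotes the vector with $(\bm{h}_E)_i=\bm{h}_i$ for $i\in E$ and $(\bm{h}_E)_i=0$ otherwise. *)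

(* Defs.v *)
From mathcomp Require Import all_boot all_order all_algebra.
Set Implicit Arguments. Unset Strict Implicit. Unset Printing Implicit Defensive.
Import Order.TTheory GRing.Theory Num.Theory.
Local Open Scope ring_scope.

(* Vectors in R^n are column vectors 'cV[R]_n; indices {1..n} are 'I_n. *)

Definition dotv (R : rcfType) (n : nat) (u v : 'cV[R]_n) : R :=
  \sum_(i < n) u i 0 * v i 0.

Definition norm2 (R : rcfType) (n : nat) (u : 'cV[R]_n) : R :=
  Num.sqrt (dotv u u).

Definition norm1 (R : rcfType) (n : nat) (u : 'cV[R]_n) : R :=
  \sum_(i < n) `|u i 0|.

Definition restr (R : rcfType) (n : nat) (h : 'cV[R]_n) (E : {set 'I_n}) : 'cV[R]_n :=
  \col_i (if i \in E then h i 0 else 0).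

(* mutual coherence: max_{i<j} |<a_i, a_j>| (0 if n <= 1) *)
Definition coherence (R : rcfType) (m n : nat) (A : 'M[R]_(m, n)) : R :=
  \big[Num.max/0]_(i < n) \big[Num.max/0]_(j < n | (i < j)%N)
     `|dotv (col i A) (col j A)|.

(* Main.v *)
Require Import Defs.
From mathcomp Require Import all_boot all_order all_algebra ring lra.
Import Order.TTheory GRing.Theory Num.Theory.
Local Open Scope ring_scope.
Section S.
Variable R : rcfType.
Lemma sum_prod n (f g : 'I_n -> R) :
  \sum_i \sum_j (f i * g j) = (\sum_i f i) * (\sum_j g j).
Proof. by rewrite big_distrl; apply: eq_bigr => i _; rewrite big_distrr. Qed.

Lemma dotv_ge0 {n} (u : 'cV[R]_n) : 0 <= dotv u u.
Proof. by apply: sumr_ge0 => i _; rewrite -expr2 sqr_ge0. Qed.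

Lemma norm2_ge0 {n} (u : 'cV[R]_n) : 0 <= norm2 u.
Proof. exact: sqrtr_ge0. Qed.

Lemma lagrange n (u v : 'cV[R]_n) :
  \sum_i \sum_j (u i 0 * v j 0 - u j 0 * v i 0)^+2
  = 2 * (dotv u u * dotv v v - dotv u v ^+ 2).
Proof.
have -> : \sum_i \sum_j (u i 0 * v j 0 - u j 0 * v i 0)^+2 =
   \sum_i \sum_j ((u i 0 * u i 0) * (v j 0 * v j 0))
 + \sum_i \sum_j ((v i 0 * v i 0) * (u j 0 * u j 0))
 - 2 * \sum_i \sum_j ((u i 0 * v i 0) * (u j 0 * v j 0)).
  rewrite mulr_sumr -big_split -sumrB /=; apply: eq_bigr => i _.
  rewrite mulr_sumr -big_split -sumrB /=; apply: eq_bigr => j _; ring.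
rewrite !sum_prod /dotv; ring.
Qed.

Lemma CS2 n (u v : 'cV[R]_n) : dotv u v ^+ 2 <= dotv u u * dotv v v.
Proof.
have : 0 <= 2 * (dotv u u * dotv v v - dotv u v ^+ 2).
  by rewrite -lagrange; apply: sumr_ge0 => i _; apply: sumr_ge0 => j _; apply: sqr_ge0.
by rewrite pmulr_rge0 // subr_ge0.
Qed.

Lemma CS {n} (u v : 'cV[R]_n) : dotv u v <= norm2 u * norm2 v.
Proof.
rewrite /norm2 -sqrtrM ?dotv_ge0 //.
apply: (le_trans (ler_norm _)).
rewrite -sqrtr_sqr ler_sqrt ?CS2 //.
by rewrite mulr_ge0 ?dotv_ge0.
Qed.

Variables (m n : nat) (A : 'M[R]_(m, n)).
Let G i j := dotv (col i A) (col j A).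

Lemma dot_mul (u v : 'cV[R]_n) :
  dotv (A *m u) (A *m v) = \sum_i \sum_j (u i 0 * v j 0 * G i j).
Proof.
rewrite /G /dotv.
have -> : \sum_(r < m) (A *m u) r 0 * (A *m v) r 0 =
   \sum_r \sum_i \sum_j (u i 0 * v j 0 * (A r i * A r j)).
  apply: eq_bigr => r _; rewrite !mxE big_distrl; apply: eq_bigr => i _.
  rewrite big_distrr; apply: eq_bigr => j _ /=; ring.
rewrite exchange_big; apply: eq_bigr => i _.
rewrite exchange_big; apply: eq_bigr => j _.
rewrite mulr_sumr; apply: eq_bigr => r _; by rewrite !mxE.
Qed.

Lemma dotvDr p (u v w : 'cV[R]_p) : dotv u (v + w) = dotv u v + dotv u w.
Proof. rewrite /dotv -big_split; apply: eq_bigr => i _; by rewrite !mxE mulrDr. Qed.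

Lemma G_sym i j : G i j = G j i.
Proof. rewrite /G /dotv; apply: eq_bigr => r _; ring. Qed.

Hypothesis Hn : forall i : 'I_n, norm2 (col i A) = 1.

Lemma G_diag i : G i i = 1.
Proof. by rewrite /G -[LHS]sqr_sqrtr ?dotv_ge0 // -/(norm2 _) Hn expr1n. Qed.

Let mu := coherence A.

Lemma mu_ge0 : 0 <= mu.
Proof. exact: bigmax_ge_id. Qed.

Lemma G_off i j : i != j -> `|G i j| <= mu.
Proof.
wlog lt : i j / (i < j)%N.
  move=> W ne; case: (ltngtP i j) => h; first exact: W.
  - by rewrite G_sym; apply: W => //; rewrite eq_sym.
  - by move: ne; rewrite (val_inj h) eqxx.
move=> _; rewrite /mu /coherence.
apply: le_trans (le_bigmax _ _ i).
exact: (le_bigmax_cond _ (fun j => `|G i j|) lt).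
Qed.

Lemma sum_delta (i : 'I_n) (F : 'I_n -> R) :
  \sum_j ((i == j)%:R * F j) = F i.
Proof.
rewrite (bigD1 i) //= eqxx mul1r big1 ?addr0 // => j; rewrite eq_sym => /negbTE ->.
by rewrite mul0r.
Qed.

Lemma absK (a : R) : `|a| * `|a| = a * a.
Proof. by rewrite -normrM ger0_norm // -expr2 sqr_ge0. Qed.

Lemma term_bound (x : 'cV[R]_n) i j :
  `|x i 0 * x j 0 * G i j - (i == j)%:R * (x i 0 * x j 0)|
    <= mu * (`|x i 0| * `|x j 0|) - mu * ((i == j)%:R * (x i 0 * x j 0)).
Proof.
have [<-|ne] := eqVneq i j.
  by rewrite G_diag mul1r mulr1 absK subrr normr0 subrr.
rewrite !mul0r subr0 mulr0 subr0 !normrM mulrC.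
by rewrite ler_wpM2r ?mulr_ge0 ?normr_ge0 // G_off.
Qed.

Lemma quad_bounds (x : 'cV[R]_n) :
  `|dotv (A *m x) (A *m x) - dotv x x| <= mu * norm1 x ^+ 2 - mu * dotv x x.
Proof.
have E1 : dotv x x = \sum_i \sum_j ((i == j)%:R * (x i 0 * x j 0)).
  by apply: eq_bigr => i _; rewrite sum_delta.
have E2 : norm1 x ^+ 2 = \sum_i \sum_j (`|x i 0| * `|x j 0|).
  by rewrite sum_prod expr2.
rewrite dot_mul E1 E2 -sumrB (mulr_sumr _ _ _ mu) (mulr_sumr _ _ _ mu) -sumrB.
apply: le_trans (ler_norm_sum _ _ _) _; apply: ler_sum => i _.
rewrite -sumrB (mulr_sumr _ _ _ mu) (mulr_sumr _ _ _ mu) -sumrB.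
apply: le_trans (ler_norm_sum _ _ _) _; apply: ler_sum => j _.
exact: term_bound.
Qed.

Lemma cross_bound (x y : 'cV[R]_n) : (forall i, x i 0 * y i 0 = 0) ->
  `|dotv (A *m x) (A *m y)| <= mu * (norm1 x * norm1 y).
Proof.
move=> Hxy; rewrite dot_mul /norm1 -sum_prod mulr_sumr.
apply: le_trans (ler_norm_sum _ _ _) _; apply: ler_sum => i _.
rewrite mulr_sumr.
apply: le_trans (ler_norm_sum _ _ _) _; apply: ler_sum => j _.
have [<-|ne] := eqVneq i j.
  by rewrite Hxy mul0r normr0 mulr_ge0 ?mu_ge0 ?mulr_ge0.
by rewrite normrM mulrC normrM ler_wpM2r ?mulr_ge0 ?normr_ge0 // G_off.
Qed.

Lemma norm1_bound (h : 'cV[R]_n) (E : {set 'I_n}) :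
  norm1 (restr h E) ^+ 2 <= #|E|%:R * dotv (restr h E) (restr h E).
Proof.
set x := restr h E.
pose u : 'cV[R]_n := \col_i `|x i 0|.
pose v : 'cV[R]_n := \col_i ((i \in E)%:R : R).
have := @CS2 n u v.
have -> : dotv u v = norm1 x.
  apply: eq_bigr => i _; rewrite !mxE.
  case: (boolP (i \in E)) => iE; rewrite ?mulr1 ?mulr0 //.
  by rewrite normr0.
have -> : dotv u u = dotv x x.
  by apply: eq_bigr => i _; rewrite !mxE absK.
have -> : dotv v v = #|E|%:R.
  rewrite /dotv (eq_bigr (fun i => if i \in E then 1 else 0)) => [|i _].
    by rewrite -big_mkcond sumr_const.
  by rewrite !mxE; case: (i \in E); rewrite ?mulr1 ?mulr0.
by rewrite mulrC.
Qed.

Lemma restr_split (h : 'cV[R]_n) (E : {set 'I_n}) :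
  h = restr h E + restr h (~: E).
Proof.
apply/matrixP => i j; rewrite (ord1 j) !mxE in_setC.
by case: (i \in E); rewrite ?addr0 ?add0r.
Qed.

Lemma restr_disj (h : 'cV[R]_n) (E : {set 'I_n}) i :
  restr h E i 0 * restr h (~: E) i 0 = 0.
Proof. by rewrite !mxE in_setC; case: (i \in E); rewrite ?mulr0 ?mul0r. Qed.

Lemma main (k : nat) (hk : (2 <= k)%N) (Hmu : mu < 1 / (k%:R - 1))
  (h : 'cV[R]_n) (E : {set 'I_n}) (HE : #|E| = k) :
  norm2 (restr h E) <= Num.sqrt (1 + (k%:R - 1) * mu) / (1 - (k%:R - 1) * mu) * norm2 (A *m h)
     + Num.sqrt k%:R * mu / (1 - (k%:R - 1) * mu) * norm1 (restr h (~: E)).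
Proof.
have Hsplit : dotv (A *m restr h E) (A *m h) =
   dotv (A *m restr h E) (A *m restr h E) + dotv (A *m restr h E) (A *m restr h (~: E)).
  by rewrite [in A *m h](restr_split h E) mulmxDr dotvDr.
have cross := @cross_bound _ _ (restr_disj h E).
have hq := quad_bounds (restr h E).
have hn1 := norm1_bound h E; rewrite HE in hn1.
have cs := CS (A *m restr h E) (A *m h : 'cV_m).
move: Hsplit cross hq hn1 cs.
set x := restr h E; set y := restr h (~: E).
set Q := dotv (A *m x) (A *m x); set N2 := dotv x x; set X1 := norm1 x; set Y := norm1 y.
set S := norm2 (A *m h); set C := dotv (A *m x) (A *m y).
move=> Hsplit cross hq hn1 cs.
have k2 : 2%:R <= k%:R :> R by rewrite ler_nat.
have k1 : 0 < k%:R - 1 :> R by lra.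
have hmu0 := mu_ge0.
have c0 : 0 < 1 - (k%:R - 1) * mu.
  by move: Hmu; rewrite ltr_pdivlMr //; lra.
set c := 1 - (k%:R - 1) * mu in c0 *.
set d := 1 + (k%:R - 1) * mu.
have d0 : 0 <= d by rewrite /d; apply: addr_ge0 => //; apply: mulr_ge0 => //; lra.
have N20 : 0 <= N2 := dotv_ge0 x.
have X10 : 0 <= X1 by apply: sumr_ge0 => i _; apply: normr_ge0.
have Y0 : 0 <= Y by apply: sumr_ge0 => i _; apply: normr_ge0.
have S0 : 0 <= S := norm2_ge0 _.
have hmuX : mu * X1 ^+ 2 <= mu * (k%:R * N2) by apply: ler_wpM2l.
move: hq; rewrite ler_norml => /andP [hq1 hq2].
have Qlo : c * N2 <= Q by rewrite /c; nra.
have Qhi : Q <= d * N2 by rewrite /d; nra.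
set N := norm2 x.
have N0 : 0 <= N := norm2_ge0 _.
have NN : N2 = N * N by rewrite /N /norm2 -expr2 sqr_sqrtr.
have hAx : norm2 (A *m x) <= Num.sqrt d * N.
  by rewrite /norm2 -/Q /N /norm2 -/N2 -sqrtrM // ler_sqrt ?mulr_ge0.
have hX1 : X1 <= Num.sqrt k%:R * N.
  rewrite -(ger0_norm X10) -sqrtr_sqr /N /norm2 -/N2 -sqrtrM ?ler0n //.
  by rewrite ler_sqrt // mulr_ge0 ?ler0n.
have t1 : norm2 (A *m x) * S <= Num.sqrt d * N * S by apply: ler_wpM2r.
have t2 : mu * (X1 * Y) <= mu * (Num.sqrt k%:R * N * Y).
  by apply: ler_wpM2l => //; apply: ler_wpM2r.
move: cross; rewrite ler_norml => /andP [cr1 cr2].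
have key : c * (N * N) <= N * (Num.sqrt d * S + mu * Num.sqrt k%:R * Y).
  rewrite -NN; apply: (le_trans Qlo).
  have -> : N * (Num.sqrt d * S + mu * Num.sqrt k%:R * Y) =
     Num.sqrt d * N * S + mu * (Num.sqrt k%:R * N * Y) by ring.
  lra.
have -> : Num.sqrt d / c * S + Num.sqrt k%:R * mu / c * Y =
   (Num.sqrt d * S + mu * Num.sqrt k%:R * Y) / c by ring.
have sd0 : 0 <= Num.sqrt d := sqrtr_ge0 _.
have sk0 : 0 <= Num.sqrt (k%:R : R) := sqrtr_ge0 _.
rewrite ler_pdivlMr //.
have [->|Npos] := eqVneq N 0.
  by rewrite mul0r addr_ge0 ?mulr_ge0.
have Np : 0 < N by rewrite lt0r Npos.
rewrite -(ler_pM2r Np); move: key; rewrite mulrA (mulrC c N) (mulrC N (_ + _)) => H.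
by rewrite [X in _ <= X]mulrC.
Qed.
End S.

Theorem lemma3 (R : rcfType) (m n k : nat) (A : 'M[R]_(m, n)) :
  (2 <= k)%N ->
  (forall i : 'I_n, norm2 (col i A) = 1) ->
  coherence A < 1 / (k%:R - 1) ->
  forall (h : 'cV[R]_n) (E : {set 'I_n}), #|E| = k ->
    let mu := coherence A in
    let alpha1 := Num.sqrt (1 + (k%:R - 1) * mu) / (1 - (k%:R - 1) * mu) in
    let alpha2 := Num.sqrt k%:R * mu / (1 - (k%:R - 1) * mu) in
    norm2 (restr h E) <= alpha1 * norm2 (A *m h) + alpha2 * norm1 (restr h (~: E)).
Proof.
move=> hk Hn Hmu h E HE /=.
exact: main.
Qed.
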